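(* Let $\alpha>-1$ and for integers $0\le j\le k$ define $$a_{k,j}=(-1)^{k-j}\binom{k}{j}\frac{\Gamma(2\alpha+k+j+2)\Gamma(2\alpha+k+2)\Gamma(\alpha+k+1)}{\Gamma(2\alpha+2k+2)\Gamma(2\alpha+j+2)\Gamma(\alpha+j+1)},\quad \hat a_{k,j}=(-1)^{k-j}\binom{k}{j}\frac{\Gamma(2\alpha+k+j+2)\Gamma(2\alpha+k+2)\Gamma(\alpha+k+2)}{\Gamma(2\alpha+2k+2)\Gamma(2\alpha+j+2)\Gamma(\alpha+j+2)}.$$ Define for $k\in\mathbb{N}$ and $0\le i\le k$ the numbers $b_{k,i}$, $\hat b_{k,i}$ recursively by $b_{k,0}=\hat b_{k,0}=1$, $b_{k,i}=-\sum_{j=0}^{i-1}b_{k,j}a_{k-j,k-i}$, $\hat b_{k,i}=-\sum_{j=0}^{i-1}\hat b_{k,j}\hat a_{k-j,k-i}$. Then for all $0\le j\le k$, $$b_{k,j}=\binom{k}{j}\frac{\Gamma(2\alpha+k+2)\Gamma(\alpha+k+1)\Gamma(2\alpha+2k+3-2j)}{\Gamma(2\alpha+k+2-j)\Gamma(\alpha+k+1-j)\Gamma(2\alpha+2k+3-j)},\qquad \hat b_{k,j}=\binom{k}{j}\frac{\Gamma(2\alpha+k+2)\Gamma(\alpha+k+2)\Gamma(2\alpha+2k+3-2j)}{\Gamma(2\alpha+k+2-j)\Gamma(\alpha+k+2-j)\Gamma(2\alpha+2k+3-j)}.$$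
   Context: The numbers $a_{k,j}$ and $\hat a_{k,j}$ are the coefficients of $x^j$ in the monic Cauchy–Laguerre biorthogonal polynomials $p_k(x)$, $q_k(y)$ associated with the weight $x^{\alpha}y^{\alpha+1}e^{-x-y}/(x+y)$ on $(0,\infty)^2$. *)

(* Defs.v *)
From Stdlib Require Import Reals.
From Coquelicot Require Import Coquelicot.
Open Scope R_scope.

(* Euler's Gamma function, defined (as usual for Re x > 0) by the improper
   integral  Gamma x = \int_0^\infty t^(x-1) e^(-t) dt.
   All Gamma arguments in the theorem are > 0 under alpha > -1. *)
Definition Gamma (x : R) : R :=
  RInt_gen (fun t => Rpower t (x - 1) * exp (- t))
           (at_right 0) (Rbar_locally p_infty).

Definition a_coef (alpha : R) (k j : nat) : R :=
  (-1) ^ (k - j) * Binomial.C k j *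
  (Gamma (2 * alpha + INR k + INR j + 2) * Gamma (2 * alpha + INR k + 2)
     * Gamma (alpha + INR k + 1))
  / (Gamma (2 * alpha + 2 * INR k + 2) * Gamma (2 * alpha + INR j + 2)
     * Gamma (alpha + INR j + 1)).

Definition ahat_coef (alpha : R) (k j : nat) : R :=
  (-1) ^ (k - j) * Binomial.C k j *
  (Gamma (2 * alpha + INR k + INR j + 2) * Gamma (2 * alpha + INR k + 2)
     * Gamma (alpha + INR k + 2))
  / (Gamma (2 * alpha + 2 * INR k + 2) * Gamma (2 * alpha + INR j + 2)
     * Gamma (alpha + INR j + 2)).

(* The recursion b_{k,0} = 1, b_{k,i} = - sum_{j=0}^{i-1} b_{k,j} c_{k-j,k-i}
   (for 1 <= i <= k), with c = a or c = \hat a.  sum_f_R0 f n = f 0 + ... + f n. *)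
Definition satisfies_rec (c : nat -> nat -> R) (b : nat -> nat -> R) : Prop :=
  forall k : nat,
    b k 0%nat = 1 /\
    forall i : nat, (S i <= k)%nat ->
      b k (S i) = - sum_f_R0 (fun j => b k j * c (k - j)%nat (k - S i)%nat) i.

(* Main.v *)
Require Import Defs.
From Stdlib Require Import Reals Lra Lia Classical.
From Coquelicot Require Import Coquelicot.
Open Scope R_scope.


Definition gf (x t : R) := Rpower t (x - 1) * exp (- t).
Definition GI (x e M : R) := RInt (gf x) e M.

Lemma gf_pos x t : 0 < gf x t.
Proof. unfold gf, Rpower. apply Rmult_lt_0_compat; apply exp_pos. Qed.
Lemma gf_cont x t : 0 < t -> continuous (gf x) t.
Proof. intros Ht. apply (@ex_derive_continuous R_AbsRing R_NormedModule).
  unfold gf, Rpower. auto_derive. lra. Qed.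
Lemma gf_ex x a b : 0 < a -> 0 < b -> ex_RInt (gf x) a b.
Proof. intros. apply (@ex_RInt_continuous R_CompleteNormedModule). intros z Hz. apply gf_cont.
  assert (Rmin a b > 0) by (apply Rmin_glb_lt; lra). lra. Qed.

Lemma GI_chasles x a b c : 0 < a -> 0 < b -> 0 < c -> GI x a b + GI x b c = GI x a c.
Proof. intros. unfold GI. rewrite <- (RInt_Chasles (gf x) a b c); try apply gf_ex; auto. Qed.

Lemma GI_ge0 x a b : 0 < a -> a <= b -> 0 <= GI x a b.
Proof. intros. unfold GI. apply RInt_ge_0; auto. apply gf_ex; lra.
  intros; left; apply gf_pos. Qed.

Lemma GI_mono x e e' M M' : 0 < e' -> e' <= e -> e <= M -> M <= M' -> GI x e M <= GI x e' M'.
Proof. intros.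
  rewrite <- (GI_chasles x e' e M') by lra. rewrite <- (GI_chasles x e M M') by lra.
  pose proof (GI_ge0 x e' e). pose proof (GI_ge0 x M M'). lra. Qed.

Lemma ln_le_sub1 t : 0 < t -> ln t <= t - 1.
Proof. intros. pose proof (exp_ineq1_le (ln t)). rewrite exp_ln in H0 by auto. lra. Qed.

Definition cst (x : R) := x * (ln (2 * x) - 1).

Lemma xln_bound x t : 0 < x -> 0 < t -> x * ln t <= t / 2 + cst x.
Proof. intros. unfold cst.
  assert (ln t = ln (t / (2*x)) + ln (2*x)).
  { rewrite <- ln_mult. f_equal. field. lra. apply Rdiv_lt_0_compat; lra. lra. }
  pose proof (ln_le_sub1 (t / (2*x))).
  assert (x * (t/(2*x)) = t/2) by (field; lra).
  rewrite H1. assert (ln (t/(2*x)) <= t/(2*x) - 1) by (apply H2; apply Rdiv_lt_0_compat; lra).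
  apply Rmult_le_compat_l with (r := x) in H4; lra. Qed.

Lemma exp_pm1 x t : 0 < t -> exp ((x - 1) * ln t) = exp (x * ln t) / t.
Proof. intros. replace ((x-1) * ln t) with (x * ln t + - ln t) by ring.
  rewrite exp_plus, exp_Ropp, exp_ln by auto. field. lra. Qed.

Lemma exp_le_m a b : a <= b -> exp a <= exp b.
Proof. intros [H|H]. left; apply exp_increasing; auto. subst; lra. Qed.

Lemma GI_bound x : 0 < x -> exists B, forall e M, 0 < e <= 1 -> 1 <= M -> GI x e M <= B.
Proof. intros Hx. exists (1 / x + 2 * exp (cst x - 1/2)). intros e M He HM.
  rewrite <- (GI_chasles x e 1 M) by lra.
  assert (H1 : GI x e 1 <= 1 / x).
  { assert (Hi : is_RInt (fun t => exp ((x-1) * ln t)) e 1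
                   (minus (exp (x * ln 1) / x) (exp (x * ln e) / x))).
    { apply (@is_RInt_derive R_CompleteNormedModule (fun t => exp (x * ln t) / x)).
      - intros t Ht. rewrite Rmin_left in Ht by lra. auto_derive. lra.
        rewrite exp_pm1 by lra. field. lra.
      - intros t Ht. rewrite Rmin_left in Ht by lra.
        apply (@ex_derive_continuous R_AbsRing R_NormedModule). auto_derive. lra. }
    destruct (Req_dec e 1) as [E|E].
    { subst. unfold GI. rewrite RInt_point. apply Rlt_le, Rdiv_lt_0_compat; lra. }
    unfold GI. eapply Rle_trans. apply RInt_le with (g := fun t => exp ((x-1) * ln t)).
    lra. apply gf_ex; lra. eexists; eauto.
    intros t Ht. unfold gf, Rpower. rewrite <- (Rmult_1_r (exp ((x-1) * ln t))) at 2.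
    apply Rmult_le_compat_l. left; apply exp_pos.
    rewrite <- exp_0. apply exp_le_m; lra.
    rewrite (is_RInt_unique _ _ _ _ Hi). unfold minus, plus, opp; simpl.
    rewrite ln_1, Rmult_0_r, exp_0. pose proof (exp_pos (x * ln e)).
    assert (0 < exp (x * ln e) / x) by (apply Rdiv_lt_0_compat; lra).
    unfold Rdiv in *. lra. }
  assert (H2 : GI x 1 M <= 2 * exp (cst x - 1/2)).
  { assert (Hi : is_RInt (fun t => exp (cst x - t/2)) 1 M
                   (minus (-2 * exp (cst x - M/2)) (-2 * exp (cst x - 1/2)))).
    { apply (@is_RInt_derive R_CompleteNormedModule (fun t => -2 * exp (cst x - t/2))).
      - intros t Ht. auto_derive. auto. unfold Rminus, Rdiv. field.
      - intros t Ht.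
        apply (@ex_derive_continuous R_AbsRing R_NormedModule). auto_derive. auto. }
    destruct (Req_dec M 1) as [E|E].
    { subst. unfold GI. rewrite RInt_point. unfold zero; simpl. pose proof (exp_pos (cst x - 1/2)). lra. }
    unfold GI. eapply Rle_trans. apply RInt_le with (g := fun t => exp (cst x - t/2)).
    lra. apply gf_ex; lra. eexists; eauto.
    intros t Ht. unfold gf, Rpower. rewrite <- exp_plus. apply exp_le_m.
    assert (0 <= ln t) by (rewrite <- ln_1; apply ln_le; lra).
    pose proof (xln_bound x t Hx ltac:(lra)). nra.
    rewrite (is_RInt_unique _ _ _ _ Hi). unfold minus, plus, opp; simpl.
    pose proof (exp_pos (cst x - M/2)). lra. }
  lra.
Qed.

Lemma ball_R (c eps y : R) : Rabs (y - c) < eps -> ball c eps y.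
Proof. intros H. unfold ball; simpl. unfold AbsRing_ball, abs, minus, plus, opp; simpl. exact H. Qed.

Lemma Gamma_lim x : 0 < x -> 0 < Gamma x /\
  forall eps, 0 < eps -> exists e0 M0, 0 < e0 /\
    forall e M, 0 < e <= e0 -> M0 <= M -> Rabs (GI x e M - Gamma x) < eps.
Proof. intros Hx.
  set (S := fun y => exists e M, 0 < e <= 1 /\ 1 <= M /\ y = GI x e M).
  assert (Hb : bound S).
  { destruct (GI_bound x Hx) as [B HB]. exists B. intros y [e [M [He [HM ->]]]]. auto. }
  assert (Hne : exists y, S y). { exists (GI x 1 1). exists 1, 1. repeat split; lra. }
  destruct (completeness S Hb Hne) as [L [HLu HLl]].
  assert (Happ : forall eps, 0 < eps -> exists e0 M0, 0 < e0 <= 1 /\ 1 <= M0 /\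
      forall e M, 0 < e <= e0 -> M0 <= M -> Rabs (GI x e M - L) < eps).
  { intros eps Heps.
    destruct (classic (exists e0 M0, 0 < e0 <= 1 /\ 1 <= M0 /\ L - eps < GI x e0 M0)) as
      [[e0 [M0 [He0 [HM0 Hlt]]]]|Hn].
    - exists e0, M0. split; auto. split; auto. intros e M He HM.
      assert (GI x e0 M0 <= GI x e M) by (apply GI_mono; lra).
      assert (GI x e M <= L) by (apply HLu; exists e, M; repeat split; lra).
      apply Rabs_def1; lra.
    - exfalso. assert (L <= L - eps); [|lra]. apply HLl. intros y [e [M [He [HM ->]]]].
      destruct (Rle_dec (GI x e M) (L - eps)) as [?|Hg]; auto. exfalso. apply Hn.
      exists e, M. repeat split; lra. }
  assert (HG : Gamma x = L).
  { unfold Gamma. apply is_RInt_gen_unique.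
    intros P [eps HP].
    destruct (Happ eps (cond_pos eps)) as [e0 [M0 [He0 [HM0 H]]]].
    unfold filtermapi.
    apply Filter_prod with (Q := fun e => 0 < e < e0) (R := fun M => M0 < M).
    - assert (0 < e0) as He0' by lra. exists (mkposreal e0 He0'). intros y Hy Hy0.
      unfold ball in Hy; simpl in Hy; unfold AbsRing_ball, abs, minus, plus, opp in Hy; simpl in Hy.
      rewrite Ropp_0, Rplus_0_r, Rabs_right in Hy by lra. lra.
    - exists M0. auto.
    - intros e M He HM. simpl. exists (RInt (gf x) e M). split.
      apply (@RInt_correct R_CompleteNormedModule). apply gf_ex; lra.
      apply HP. apply ball_R. apply H; lra. }
  rewrite HG. split.
  - apply Rlt_le_trans with (GI x 1 2).
    unfold GI. apply RInt_gt_0. lra. intros; apply gf_pos. intros; apply gf_cont; lra.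
    apply HLu. exists 1, 2. repeat split; lra.
  - intros eps Heps. destruct (Happ eps Heps) as [e0 [M0 [He0 [HM0 H]]]].
    exists e0, M0. split. lra. auto.
Qed.

Lemma gf_succ x t : 0 < t -> gf (x + 1) t = exp (x * ln t) * exp (- t).
Proof. intros. unfold gf, Rpower. do 2 f_equal. ring. Qed.

Lemma gf_eq x t : 0 < t -> gf x t = exp (x * ln t) / t * exp (- t).
Proof. intros. unfold gf, Rpower. rewrite exp_pm1; auto. Qed.

Definition hh (x t : R) := - (exp (x * ln t) * exp (- t)).

Lemma GI_parts x e M : 0 < x -> 0 < e -> 0 < M ->
  GI (x + 1) e M - x * GI x e M = hh x M - hh x e.
Proof. intros Hx He HM.
  assert (E1 : RInt (fun t => gf (x+1) t - x * gf x t) e M = hh x M - hh x e).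
  { apply is_RInt_unique.
    apply (@is_RInt_derive R_CompleteNormedModule (hh x)).
    - intros t Ht. assert (0 < t) by (assert (Rmin e M > 0) by (apply Rmin_glb_lt; lra); lra).
      unfold hh. auto_derive. lra. rewrite gf_succ, gf_eq by lra. field. lra.
    - intros t Ht. assert (0 < t) by (assert (Rmin e M > 0) by (apply Rmin_glb_lt; lra); lra).
      apply (@continuous_minus R_UniformSpace R_AbsRing R_NormedModule). apply gf_cont; auto.
      apply (@continuous_scal_r R_UniformSpace R_AbsRing R_NormedModule). apply gf_cont; auto. }
  assert (E2 : RInt (fun t => gf (x+1) t - x * gf x t) e M = GI (x+1) e M - x * GI x e M).
  { apply is_RInt_unique. unfold GI.
    apply (@is_RInt_minus R_NormedModule).
    apply (@RInt_correct R_CompleteNormedModule). apply gf_ex; lra.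
    apply (@is_RInt_scal R_NormedModule).
    apply (@RInt_correct R_CompleteNormedModule). apply gf_ex; lra. }
  rewrite <- E1, <- E2. reflexivity. Qed.

Lemma hh_small x e eps : 0 < x -> 0 < eps -> 0 < e <= exp (ln eps / x) / 2 -> Rabs (hh x e) < eps.
Proof. intros Hx Heps He. unfold hh. rewrite Rabs_Ropp, Rabs_right.
  2: { left; apply Rmult_lt_0_compat; apply exp_pos. }
  assert (ln e < ln eps / x).
  { rewrite <- (ln_exp (ln eps / x)). apply ln_increasing. lra.
    pose proof (exp_pos (ln eps / x)). lra. }
  assert (x * ln e < ln eps).
  { apply Rmult_lt_compat_l with (r := x) in H; auto. unfold Rdiv in H.
    replace (x * (ln eps * / x)) with (ln eps) in H by (field; lra). auto. }
  assert (exp (x * ln e) < eps). { rewrite <- (exp_ln eps) by auto. apply exp_increasing; auto. }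
  assert (exp (- e) <= 1). { rewrite <- exp_0. apply exp_le_m. lra. }
  pose proof (exp_pos (x * ln e)). pose proof (exp_pos (- e)). nra. Qed.

Lemma hh_large x M eps : 0 < x -> 0 < eps -> 2 * (cst x - ln eps) + 1 <= M -> 0 < M -> Rabs (hh x M) < eps.
Proof. intros Hx Heps HM HM0. unfold hh. rewrite Rabs_Ropp, Rabs_right.
  2: { left; apply Rmult_lt_0_compat; apply exp_pos. }
  rewrite <- exp_plus. rewrite <- (exp_ln eps) by auto. apply exp_increasing.
  pose proof (xln_bound x M Hx HM0). lra. Qed.

Lemma Gamma_succ x : 0 < x -> Gamma (x + 1) = x * Gamma x.
Proof. intros Hx.
  destruct (Gamma_lim x Hx) as [_ H0]. destruct (Gamma_lim (x+1) ltac:(lra)) as [_ H1].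
  set (D := Gamma (x + 1) - x * Gamma x).
  assert (forall eps, 0 < eps -> Rabs D <= (3 + x) * eps).
  { intros eps Heps.
    destruct (H0 eps Heps) as [e0 [M0 [He0 HA]]]. destruct (H1 eps Heps) as [e1 [M1 [He1 HB]]].
    set (e := Rmin (Rmin e0 e1) (exp (ln eps / x) / 2)).
    set (M := Rmax (Rmax M0 M1) (Rmax (2 * (cst x - ln eps) + 1) 1)).
    assert (Hee : 0 < e).
    { unfold e. pose proof (exp_pos (ln eps / x)). repeat apply Rmin_glb_lt; lra. }
    assert (e <= e0 /\ e <= e1 /\ e <= exp (ln eps / x) / 2) as [Ha [Hb Hc]].
    { unfold e. repeat split.
      eapply Rle_trans; [apply Rmin_l|apply Rmin_l].
      eapply Rle_trans; [apply Rmin_l|apply Rmin_r]. apply Rmin_r. }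
    assert (M0 <= M /\ M1 <= M /\ 2 * (cst x - ln eps) + 1 <= M /\ 1 <= M) as [Ma [Mb [Mc Md]]].
    { unfold M. repeat split.
      eapply Rle_trans; [apply Rmax_l|apply Rmax_l].
      eapply Rle_trans; [apply Rmax_r|apply Rmax_l].
      eapply Rle_trans; [apply Rmax_l|apply Rmax_r].
      eapply Rle_trans; [apply Rmax_r|apply Rmax_r]. }
    specialize (HA e M ltac:(lra) Ma). specialize (HB e M ltac:(lra) Mb).
    pose proof (hh_small x e eps Hx Heps ltac:(lra)).
    pose proof (hh_large x M eps Hx Heps Mc ltac:(lra)).
    pose proof (GI_parts x e M Hx Hee ltac:(lra)).
    apply Rabs_def2 in HA. apply Rabs_def2 in HB. apply Rabs_def2 in H. apply Rabs_def2 in H2.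
    unfold D. apply Rabs_le. nra. }
  destruct (Req_dec D 0) as [E|E]. unfold D in E. lra.
  assert (0 < Rabs D) by (apply Rabs_pos_lt; auto).
  specialize (H (Rabs D / (4 + x)) ltac:(apply Rdiv_lt_0_compat; lra)).
  assert ((3 + x) * (Rabs D / (4 + x)) < Rabs D).
  { unfold Rdiv. apply Rmult_lt_reg_r with (4 + x). lra.
    replace ((3 + x) * (Rabs D * / (4 + x)) * (4 + x)) with ((3 + x) * Rabs D) by (field; lra). nra. }
  lra. Qed.

Fixpoint Pr (y : R) (n : nat) : R :=
  match n with O => y | S m => Pr y m * (y + INR (S m)) end.

Lemma Pr_pos y n : 0 < y -> 0 < Pr y n.
Proof. intros. induction n; cbn [Pr]. auto. apply Rmult_lt_0_compat; auto.
  pose proof (pos_INR (S n)). lra. Qed.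

Lemma Pr_S y n : Pr y (S n) = y * Pr (y + 1) n.
Proof. induction n. simpl. ring.
  change (Pr y (S (S n))) with (Pr y (S n) * (y + INR (S (S n)))). rewrite IHn.
  cbn [Pr]. rewrite !S_INR. ring. Qed.

Lemma C_rel n m : (m < n)%nat -> Binomial.C n m * INR (n - m) = Binomial.C n (S m) * INR (S m).
Proof. intros H. unfold Binomial.C.
  replace (n - m)%nat with (S (n - S m)) by lia.
  change (Factorial.fact (S m)) with (S m * Factorial.fact m)%nat.
  change (Factorial.fact (S (n - S m))) with (S (n - S m) * Factorial.fact (n - S m))%nat.
  rewrite !mult_INR. pose proof (INR_fact_neq_0 m). pose proof (INR_fact_neq_0 (n - S m)).
  pose proof (INR_fact_neq_0 n). assert (INR (S m) <> 0) by (apply not_0_INR; lia).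
  assert (INR (S (n - S m)) <> 0) by (apply not_0_INR; lia).
  field. auto. Qed.

Lemma C_prod k n j : (j <= n)%nat -> (n <= k)%nat ->
  Binomial.C k j * Binomial.C (k - j) (k - n) = Binomial.C k n * Binomial.C n j.
Proof. intros. unfold Binomial.C.
  replace (k - j - (k - n))%nat with (n - j)%nat by lia.
  pose proof (INR_fact_neq_0 k). pose proof (INR_fact_neq_0 j). pose proof (INR_fact_neq_0 (k-j)).
  pose proof (INR_fact_neq_0 (k-n)). pose proof (INR_fact_neq_0 (n-j)). pose proof (INR_fact_neq_0 n).
  field. auto. Qed.

Lemma C_n_0 n : Binomial.C n 0 = 1.
Proof. unfold Binomial.C. rewrite Nat.sub_0_r. simpl (Factorial.fact 0). simpl INR.
  pose proof (INR_fact_neq_0 n). field. auto. Qed.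
Lemma C_n_n n : Binomial.C n n = 1.
Proof. unfold Binomial.C. rewrite Nat.sub_diag. simpl (Factorial.fact 0). simpl INR.
  pose proof (INR_fact_neq_0 n). field. auto. Qed.

Definition Tt (x : R) (n j : nat) : R :=
  (-1) ^ (n - j) * Binomial.C n j * (x + INR n - 2 * INR j) / Pr (x - INR j) n.

Lemma partial_sum x n' m : INR (S n') < x -> (m <= n')%nat ->
  sum_f_R0 (Tt x (S n')) m = (-1) ^ (S n' - m) * Binomial.C n' m / Pr (x - INR m) n'.
Proof. intros Hx. pose proof (pos_INR n') as Hn'. rewrite S_INR in Hx. induction m; intros Hm.
  - simpl sum_f_R0. unfold Tt. cbn [Pr]. rewrite !Nat.sub_0_r.
    assert (0 < Pr (x - INR 0) n') by (apply Pr_pos; simpl; lra).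
    assert (Binomial.C (S n') 0 = 1) by (apply C_n_0). assert (Binomial.C n' 0 = 1) by (apply C_n_0).
    rewrite H0, H1. rewrite !S_INR. simpl (INR 0) in *. field. assert (0 < Pr (x - 0) n') by (simpl in H; auto). split; lra.
  - cbn [sum_f_R0]. rewrite IHm by lia. unfold Tt.
    set (z := x - INR (S m)).
    assert (Hm' : INR (S m) <= INR n') by (apply le_INR; lia).
    assert (Hz : 0 < z) by (unfold z; lra).
    assert (E1 : Pr z (S n') = Pr z n' * (z + INR (S n'))) by reflexivity.
    assert (E2 : Pr z (S n') = z * Pr (x - INR m) n').
    { rewrite Pr_S. replace (z + 1) with (x - INR m) by (unfold z; rewrite S_INR; ring). reflexivity. }
    assert (HA : 0 < Pr z n') by (apply Pr_pos; auto).
    assert (HR : 0 < Pr (x - INR m) n') by (apply Pr_pos; rewrite S_INR in Hm'; lra).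
    assert (Hp : Binomial.C (S n') (S m) = Binomial.C n' m + Binomial.C n' (S m)).
    { symmetry. apply pascal. lia. }
    assert (Hc : Binomial.C n' m = Binomial.C n' (S m) * INR (S m) / INR (n' - m)).
    { assert (INR (n' - m) <> 0) by (apply not_0_INR; lia).
      rewrite <- C_rel by lia. field. auto. }
    assert (Hs : (-1) ^ (S n' - m) = - (-1) ^ (S n' - S m)).
    { replace (S n' - m)%nat with (S (S n' - S m)) by lia. simpl. ring. }
    rewrite Hs, Hp, Hc. fold z. rewrite E1.
    assert (Pr (x - INR m) n' = Pr z n' * (z + INR (S n')) / z).
    { rewrite <- E1, E2. field. lra. }
    rewrite H. rewrite minus_INR by lia. unfold z in *. rewrite !S_INR in *.
    field. repeat split; lra.
Qed.

Lemma sum_T x n : (1 <= n)%nat -> INR n < x -> sum_f_R0 (Tt x n) n = 0.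
Proof. intros Hn Hx. destruct n as [|n']. lia.
  rewrite tech5. rewrite partial_sum by (auto; lia). unfold Tt.
  rewrite Nat.sub_diag. rewrite C_n_n, C_n_n.
  replace (S n' - n')%nat with 1%nat by lia.
  assert (E : Pr (x - INR (S n')) (S n') = (x - INR (S n')) * Pr (x - INR n') n').
  { rewrite Pr_S. replace (x - INR (S n') + 1) with (x - INR n') by (rewrite S_INR; ring). reflexivity. }
  rewrite E. assert (0 < Pr (x - INR n') n') by (apply Pr_pos; rewrite S_INR in Hx; lra).
  simpl pow. field. split; lra. Qed.

Lemma Gamma_pos x : 0 < x -> 0 < Gamma x.
Proof. intros. apply (Gamma_lim x H). Qed.

Lemma Gamma_shift y n : 0 < y -> Gamma (y + INR n + 1) = Pr y n * Gamma y.
Proof. intros Hy. induction n.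
  - cbn [Pr]. simpl (INR 0). rewrite Rplus_0_r. apply Gamma_succ; auto.
  - cbn [Pr]. replace (y + INR (S n) + 1) with ((y + INR n + 1) + 1) by (rewrite S_INR; ring).
    rewrite Gamma_succ. rewrite IHn. rewrite S_INR. ring.
    pose proof (pos_INR n). lra. Qed.

Lemma C_pos n k : 0 < Binomial.C n k.
Proof. unfold Binomial.C. pose proof (INR_fact_lt_0 n). pose proof (INR_fact_lt_0 k).
  pose proof (INR_fact_lt_0 (n - k)). apply Rdiv_lt_0_compat; auto. apply Rmult_lt_0_compat; auto. Qed.

Definition ag (al s : R) (k j : nat) : R :=
  (-1) ^ (k - j) * Binomial.C k j *
  (Gamma (2 * al + INR k + INR j + 2) * Gamma (2 * al + INR k + 2)
     * Gamma (al + INR k + s))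
  / (Gamma (2 * al + 2 * INR k + 2) * Gamma (2 * al + INR j + 2)
     * Gamma (al + INR j + s)).

Definition Dg (al s : R) (k j : nat) : R :=
      Binomial.C k j *
      (Gamma (2 * al + INR k + 2) * Gamma (al + INR k + s)
         * Gamma (2 * al + 2 * INR k + 3 - 2 * INR j))
      / (Gamma (2 * al + INR k + 2 - INR j) * Gamma (al + INR k + s - INR j)
         * Gamma (2 * al + 2 * INR k + 3 - INR j)).

Definition Kc (al s : R) (k n : nat) : R :=
  Binomial.C k n * (Gamma (2 * al + INR k + 2) * Gamma (al + INR k + s))
  / (Gamma (2 * al + (INR k - INR n) + 2) * Gamma (al + (INR k - INR n) + s)).

Ltac gpos := apply Gamma_pos; lra.

Lemma term_eq al s k n j : -1 < al -> 0 < al + s -> (j <= n)%nat -> (n <= k)%nat ->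
  Dg al s k j * ag al s (k - j) (k - n) =
  Tt (2 * al + 2 * INR k + 2 - INR n) n j * Kc al s k n.
Proof. intros Hal Hs Hjn Hnk.
  unfold Dg, ag, Tt, Kc.
  replace (k - j - (k - n))%nat with (n - j)%nat by lia.
  assert (Hc : Binomial.C (k - j) (k - n) = Binomial.C k n * Binomial.C n j / Binomial.C k j).
  { rewrite <- C_prod by lia. pose proof (C_pos k j). field. lra. }
  rewrite Hc. rewrite !minus_INR by lia.
  assert (Hv : 0 <= INR j) by apply pos_INR.
  assert (Hvw : INR j <= INR n) by (apply le_INR; lia).
  assert (Hwu : INR n <= INR k) by (apply le_INR; lia).
  set (u := INR k) in *. set (v := INR j) in *. set (w := INR n) in *.
  assert (G1 : Gamma (2 * al + 2 * u + 3 - 2 * v) = (2 * al + 2 * (u - v) + 2) * Gamma (2 * al + 2 * (u - v) + 2)).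
  { rewrite <- Gamma_succ by lra. f_equal. ring. }
  assert (G2 : Gamma (2 * al + 2 * u + 3 - v) = Pr (2 * al + 2 * u + 2 - w - v) n * Gamma (2 * al + (u - v) + (u - w) + 2)).
  { replace (2 * al + 2 * u + 2 - w - v) with (2 * al + (u - v) + (u - w) + 2) by ring.
    rewrite <- Gamma_shift by lra. f_equal. unfold w. ring. }
  assert (G3 : Gamma (2 * al + u + 2 - v) = Gamma (2 * al + (u - v) + 2)) by (f_equal; ring).
  assert (G4 : Gamma (al + u + s - v) = Gamma (al + (u - v) + s)) by (f_equal; ring).
  rewrite G1, G2, G3, G4.
  assert (P1 : 0 < Pr (2 * al + 2 * u + 2 - w - v) n) by (apply Pr_pos; lra).
  assert (0 < Gamma (2 * al + (u - v) + 2)) by gpos.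
  assert (0 < Gamma (2 * al + 2 * (u - v) + 2)) by gpos.
  assert (0 < Gamma (2 * al + (u - v) + (u - w) + 2)) by gpos.
  assert (0 < Gamma (al + (u - v) + s)) by gpos.
  assert (0 < Gamma (2 * al + (u - w) + 2)) by gpos.
  assert (0 < Gamma (al + (u - w) + s)) by gpos.
  assert (0 < Binomial.C k j) by apply C_pos.
  replace (2 * al + 2 * u + 2 - w - v) with (2 * al + 2 * u + 2 - w - v) by ring.
  field. repeat split; apply Rgt_not_eq; lra.
Qed.

Lemma sum_zero al s k n : -1 < al -> 0 < al + s -> (1 <= n)%nat -> (n <= k)%nat ->
  sum_f_R0 (fun j => Dg al s k j * ag al s (k - j) (k - n)) n = 0.
Proof. intros Hal Hs H1 Hnk.
  rewrite (sum_eq _ (fun j => Tt (2 * al + 2 * INR k + 2 - INR n) n j * Kc al s k n)).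
  - rewrite <- scal_sum. rewrite sum_T; auto. ring.
    assert (INR n <= INR k) by (apply le_INR; lia). lra.
  - intros j Hj. apply term_eq; auto. Qed.

Lemma ag_diag al s m : -1 < al -> 0 < al + s -> ag al s m m = 1.
Proof. intros Hal Hs. unfold ag. rewrite Nat.sub_diag, C_n_n.
  pose proof (pos_INR m).
  replace (2 * al + INR m + INR m + 2) with (2 * al + 2 * INR m + 2) by ring.
  assert (0 < Gamma (2 * al + 2 * INR m + 2)) by gpos.
  assert (0 < Gamma (2 * al + INR m + 2)) by gpos.
  assert (0 < Gamma (al + INR m + s)) by gpos.
  simpl pow. field. repeat split; apply Rgt_not_eq; lra. Qed.

Lemma Dg_0 al s k : -1 < al -> 0 < al + s -> Dg al s k 0 = 1.
Proof. intros Hal Hs. unfold Dg. rewrite C_n_0. simpl (INR 0).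
  pose proof (pos_INR k).
  replace (2 * al + INR k + 2 - 0) with (2 * al + INR k + 2) by ring.
  replace (al + INR k + s - 0) with (al + INR k + s) by ring.
  replace (2 * al + 2 * INR k + 3 - 2 * 0) with (2 * al + 2 * INR k + 3) by ring.
  replace (2 * al + 2 * INR k + 3 - 0) with (2 * al + 2 * INR k + 3) by ring.
  assert (0 < Gamma (2 * al + 2 * INR k + 3)) by gpos.
  assert (0 < Gamma (2 * al + INR k + 2)) by gpos.
  assert (0 < Gamma (al + INR k + s)) by gpos.
  field. repeat split; apply Rgt_not_eq; lra. Qed.

Lemma main_gen al s b : -1 < al -> 0 < al + s -> satisfies_rec (ag al s) b ->
  forall k j, (j <= k)%nat -> b k j = Dg al s k j.
Proof. intros Hal Hs Hb k.
  assert (forall i, (i <= k)%nat -> forall j, (j <= i)%nat -> b k j = Dg al s k j).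
  { induction i; intros Hi j Hj.
    - assert (j = 0%nat) by lia. subst. rewrite Dg_0 by auto. apply (Hb k).
    - destruct (Nat.le_gt_cases j i) as [Hji|Hji]. apply IHi; lia.
      assert (j = S i) by lia. subst j.
      destruct (Hb k) as [_ Hrec]. rewrite (Hrec i Hi).
      rewrite (sum_eq _ (fun j => Dg al s k j * ag al s (k - j) (k - S i))).
      2: { intros j Hj'. rewrite (IHi ltac:(lia) j Hj'). reflexivity. }
      pose proof (sum_zero al s k (S i) Hal Hs ltac:(lia) Hi) as Z.
      rewrite tech5 in Z. rewrite ag_diag in Z by auto. lra. }
  intros j Hj. apply (H k); auto. Qed.

Theorem mainTheorem4 (alpha : R) (Halpha : -1 < alpha)
  (b bhat : nat -> nat -> R)
  (Hb : satisfies_rec (a_coef alpha) b)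
  (Hbhat : satisfies_rec (ahat_coef alpha) bhat) :
  forall k j : nat, (j <= k)%nat ->
    b k j =
      Binomial.C k j *
      (Gamma (2 * alpha + INR k + 2) * Gamma (alpha + INR k + 1)
         * Gamma (2 * alpha + 2 * INR k + 3 - 2 * INR j))
      / (Gamma (2 * alpha + INR k + 2 - INR j) * Gamma (alpha + INR k + 1 - INR j)
         * Gamma (2 * alpha + 2 * INR k + 3 - INR j))
    /\
    bhat k j =
      Binomial.C k j *
      (Gamma (2 * alpha + INR k + 2) * Gamma (alpha + INR k + 2)
         * Gamma (2 * alpha + 2 * INR k + 3 - 2 * INR j))
      / (Gamma (2 * alpha + INR k + 2 - INR j) * Gamma (alpha + INR k + 2 - INR j)
         * Gamma (2 * alpha + 2 * INR k + 3 - INR j)).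
Proof.
  intros k j Hjk. split.
  - exact (main_gen alpha 1 b Halpha ltac:(lra) Hb k j Hjk).
  - exact (main_gen alpha 2 bhat Halpha ltac:(lra) Hbhat k j Hjk).
Qed.
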